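(* Let $K$ be an algebraically closed field of characteristic three, and let $G$ be a small finite subgroup of $\mathrm{SL}(3,K)$ of order $3^r$. Then $G\cong C_3^r$ (the direct product of $r$ copies of the cyclic group of order three).
   Context: An element $g\in G\subset\mathrm{GL}(3,K)$ is a pseudo-reflection if its fixed subspace in $K^3$ has dimension $2$; $G$ is small if it contains no pseudo-reflection. *)

(* Defs.v *)
From HB Require Import structures.
From mathcomp Require Import all_boot all_order all_algebra all_field.
From mathcomp Require Import finmap.
Set Implicit Arguments. Unset Strict Implicit. Unset Printing Implicit Defensive.
Import GRing.Theory.
Local Open Scope ring_scope.

(* Fixed subspace of g acting on K^3 (row-vector convention):
   the row space of kermx (g - 1), i.e. {v | v *m g = v}. *)
Definition fixed_space (K : fieldType) (g : 'M[K]_3) : 'M[K]_3 :=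
  kermx (g - 1%:M).

Definition pseudo_reflection (K : fieldType) (g : 'M[K]_3) : bool :=
  \rank (fixed_space g) == 2%N.

Definition is_finite_subgroup_SL3 (K : fieldType) (G : {fset 'M[K]_3}) : Prop :=
  [/\ (1%:M : 'M[K]_3) \in G,
      (forall g h, g \in G -> h \in G -> g *m h \in G),
      (forall g, g \in G -> g \in unitmx /\ invmx g \in G) &
      (forall g, g \in G -> \det g = 1)].

Definition small (K : fieldType) (G : {fset 'M[K]_3}) : Prop :=
  forall g, g \in G -> ~~ pseudo_reflection g.

(* The direct product C_3^r, as the additive group of functions 'I_r -> Z/3. *)
Definition C3pow (r : nat) := {ffun 'I_r -> 'Z_3}.

Definition iso_C3pow (K : fieldType) (G : {fset 'M[K]_3}) (r : nat) : Prop :=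
  exists phi : C3pow r -> 'M[K]_3,
    [/\ injective phi,
        (forall a, phi a \in G),
        (forall g, g \in G -> exists a, phi a = g) &
        (forall a b, phi (a + b) = phi a *m phi b)].

(* Main.v *)
Require Import Defs.
From HB Require Import structures.
From mathcomp Require Import all_boot all_order all_algebra all_field all_fingroup all_solvable.
From mathcomp Require Import finmap.
Set Implicit Arguments. Unset Strict Implicit. Unset Printing Implicit Defensive.
Import GRing.Theory.
Local Open Scope ring_scope.

Lemma unip3 (K : fieldType) (g : 'M[K]_3) m :
  3%N \in [pchar K] -> g ^+ (3 ^ m) = 1 -> (g - 1) ^+ 3 = 0.
Proof.
move=> ch3 gm.
have pn : ([pchar {poly K}]).-nat (3 ^ m)%N.
  rewrite pnatX; apply/orP; left; rewrite pnatE //.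
  by rewrite (pchar_poly K).
have dv : mxminpoly g %| ('X - 1%:P) ^+ (3 ^ m).
  apply: mxminpoly_min.
  rewrite (exprDn_pchar _ _ pn) rmorphD !rmorphXn /= horner_mx_X rmorphN /= horner_mx_C gm.
  have -> : (- (1%:M : 'M[K]_3)) ^+ (3 ^ m) = -1.
    by rewrite -signr_odd oddX /= orbT expr1.
  by rewrite subrr.
case/dvdp_exp_XsubCP: dv => k _.
rewrite eqp_monic ?mxminpoly_monic ?monic_exp ?monicXsubC // => /eqP Ep.
have k3 : (k <= 3)%N.
  have := dvdp_leq (monic_neq0 (char_poly_monic g)) (mxminpoly_dvd_char g).
  by rewrite size_char_poly Ep size_exp_XsubC.
have := mx_root_minpoly g; rewrite Ep rmorphXn rmorphB /= horner_mx_X horner_mx_C => gk.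
have -> : (g - 1) ^+ 3 = (g - 1) ^+ k * (g - 1) ^+ (3 - k) by rewrite -exprD subnKC.
by rewrite gk mul0r.
Qed.

Lemma frob3 (K : fieldType) (g : 'M[K]_3) :
  3%N \in [pchar K] -> (g - 1) ^+ 3 = 0 -> g ^+ 3 = 1.
Proof.
move=> ch3 N3.
have chM : 3%N \in [pchar 'M[K]_3] by rewrite (pchar_lalg 'M[K]_3).
have := pFrobenius_autD_comm chM (commr1 (g - 1)).
by rewrite !pFrobenius_autE N3 expr1n add0r subrK.
Qed.
Lemma rank2 (K : fieldType) (g : 'M[K]_3) :
  (g - 1) ^+ 3 = 0 -> g != 1 -> ~~ pseudo_reflection g -> \rank (g - 1) = 2%N.
Proof.
move=> N3 g1 npr.
have r0 : \rank (g - 1) != 0%N by rewrite mxrank_eq0 subr_eq0.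
have r1 : \rank (g - 1) != 1%N.
  apply: contra npr => /eqP r1.
  by rewrite /pseudo_reflection /fixed_space mxrank_ker r1.
have r3 : \rank (g - 1) != 3%N.
  apply/negP => /eqP r3.
  have : (g - 1) \in unitmx by rewrite -row_free_unit /row_free r3.
  move/(unitrX 3); rewrite N3 unitr0 //.
have := rank_leq_row (g - 1).
move: r0 r1 r3; case: (\rank (g - 1)) => [|[|[|[|]]]] //.
Qed.

Lemma sq_neq0 (K : fieldType) (N : 'M[K]_3) : \rank N = 2%N -> N ^+ 2 != 0.
Proof.
move=> rN; apply/negP => /eqP N2.
have := mxrank_mul_ker N N.
have -> : N *m N = 0 by rewrite mulmxE -expr2 N2.
rewrite mxrank0 add0n rN => H.
have := mxrankS (capmxSr N (kermx N)).
by rewrite H mxrank_ker rN.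
Qed.
Lemma comm_poly (K : fieldType) (N A : 'M[K]_3) :
  N ^+ 3 = 0 -> N ^+ 2 != 0 -> A * N = N * A ->
  exists p : {poly K}, A = horner_mx N p.
Proof.
move=> N3 N2 cAN.
have [i Hi] : exists i, row i (N ^+ 2) != 0.
  case: (pickP (fun i => row i (N ^+ 2) != 0)) => [i Hi|H]; first by exists i.
  case/negP: N2; apply/eqP/row_matrixP => j; rewrite row0.
  by move: (H j) => /= /negbFE/eqP.
pose v : 'rV[K]_3 := row i 1%:M.
have vw : v *m N ^+ 2 != 0 by rewrite /v -row_mul mul1mx.
pose B : 'M[K]_3 := \matrix_(j < 3) (v *m N ^+ j).
pose P (c : 'rV[K]_3) : {poly K} := \sum_(j < 3) c 0 j *: 'X^j.
have hP c : horner_mx N (P c) = \sum_(j < 3) c 0 j *: N ^+ j.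
  rewrite raddf_sum; apply: eq_bigr => j _.
  apply: (etrans (horner_mxZ _ _ _)); congr (_ *: _).
  by rewrite rmorphXn /= horner_mx_X.
have cB c : c *m B = v *m horner_mx N (P c).
  rewrite mulmx_sum_row hP mulmx_sumr; apply: eq_bigr => j _.
  by rewrite rowK scalemxAr.
have hP3 c : horner_mx N (P c) = c 0 0 *: 1 + c 0 1 *: N + c 0 2 *: N ^+ 2.
  rewrite hP !big_ord_recr big_ord0 /= add0r expr0 expr1.
  by congr ((c 0 _)%:A + c 0 _ *: N + c 0 _ *: _); apply: val_inj.
have mE (X Y : 'M[K]_3) : X *m Y = X * Y by [].
have N4 : N ^+ 4 = 0 by rewrite exprS N3 mulr0.
have indep (c : 'rV[K]_3) : c *m B = 0 -> c = 0.
  move=> Hc; move: Hc; rewrite cB hP3 => Hc.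
  have H2 : c 0 0 *: (v *m N ^+ 2) = 0.
    move: (congr1 (mulmx^~ (N ^+ 2)) Hc); rewrite mul0mx -mulmxA.
    rewrite mE !mulrDl -!scalerAl mul1r -exprS N3 -exprD N4 => H.
    by rewrite -[RHS]H !scaler0 !addr0 scalemxAr.
  have c0 : c 0 0 = 0 by move/eqP: H2; rewrite scaler_eq0 (negbTE vw) orbF => /eqP.
  move: Hc; rewrite c0 scale0r add0r => Hc.
  have H1 : c 0 1 *: (v *m N ^+ 2) = 0.
    move: (congr1 (mulmx^~ N) Hc); rewrite mul0mx -mulmxA.
    rewrite mE !mulrDl -!scalerAl -expr2 -exprSr N3 => H.
    by rewrite -[RHS]H !scaler0 !addr0 scalemxAr.
  have c1 : c 0 1 = 0 by move/eqP: H1; rewrite scaler_eq0 (negbTE vw) orbF => /eqP.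
  move: Hc; rewrite c1 scale0r add0r -scalemxAr => /eqP.
  rewrite scaler_eq0 (negbTE vw) orbF => /eqP c2.
  apply/rowP => j; rewrite mxE.
  case: j => [[|[|[|//]]] Hj].
  - by rewrite -c0; congr (c 0 _); apply: val_inj.
  - by rewrite -c1; congr (c 0 _); apply: val_inj.
  - by rewrite -c2; congr (c 0 _); apply: val_inj.
have Bu : B \in unitmx.
  rewrite -row_free_unit -kermx_eq0; apply/eqP/row_matrixP => j.
  rewrite row0; apply: indep.
  by rewrite -row_mul mulmx_ker row0.
pose c := (v *m A) *m invmx B.
have vq : v *m horner_mx N (P c) = v *m A by rewrite -cB mulmxKV.
exists (P c).
set q := horner_mx N (P c).
have BA : B *m A = B *m q.
  apply/row_matrixP => j; rewrite !row_mul rowK -!mulmxA !mE.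
  have -> : N ^+ j * A = A * N ^+ j by apply/esym/commrX.
  have -> : N ^+ j * q = q * N ^+ j.
    have := comm_horner_mx2 N 'X^j (P c).
    by rewrite rmorphXn /= horner_mx_X.
  by rewrite -!mE !mulmxA vq.
by rewrite -(mulKmx Bu A) BA mulKmx.
Qed.
Section Proj.
Variables (K : fieldType) (G : {fset 'M[K]_3}) (HG : is_finite_subgroup_SL3 G).
Lemma sg1 : (1%:M : 'M[K]_3) \in G. Proof. by case: HG. Qed.
Lemma sgM g h : g \in G -> h \in G -> g *m h \in G. Proof. by case: HG => _ H _ _; apply: H. Qed.
Lemma sgU g : g \in G -> g \in unitmx. Proof. by case: HG => _ _ H _ /H []. Qed.
Lemma sgV g : g \in G -> invmx g \in G. Proof. by case: HG => _ _ H _ /H []. Qed.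
End Proj.

Definition gT (K : fieldType) (G : {fset 'M[K]_3}) (HG : is_finite_subgroup_SL3 G) : predArgType :=
  fset_sub_type G.
HB.instance Definition _ (K : fieldType) (G : {fset 'M[K]_3}) (HG : is_finite_subgroup_SL3 G) :=
  Finite.copy (gT HG) (fset_sub_type G).

Section Grp.
Variables (K : fieldType) (G : {fset 'M[K]_3}) (HG : is_finite_subgroup_SL3 G).
Definition gmul (x y : gT HG) : gT HG := FSetSub (sgM HG (fsvalP x) (fsvalP y)).
Definition gone : gT HG := FSetSub (sg1 HG).
Definition ginv (x : gT HG) : gT HG := FSetSub (sgV HG (fsvalP x)).
Lemma gmulA : associative gmul.
Proof. by move=> x y z; apply: val_inj; rewrite /= mulmxA. Qed.
Lemma gmul1 : left_id gone gmul.
Proof. by move=> x; apply: val_inj; rewrite /= mul1mx. Qed.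
Lemma gmulV : left_inverse gone ginv gmul.
Proof. by move=> x; apply: val_inj; rewrite /= mulVmx // (sgU HG (fsvalP x)). Qed.
End Grp.

HB.instance Definition _ (K : fieldType) (G : {fset 'M[K]_3}) (HG : is_finite_subgroup_SL3 G) :=
  Finite_isGroup.Build (gT HG) (@gmulA K G HG) (@gmul1 K G HG) (@gmulV K G HG).

Section Props.
Variables (K : fieldType) (G : {fset 'M[K]_3}) (HG : is_finite_subgroup_SL3 G).
Lemma valM (x y : gT HG) : val (x * y)%g = val x *m val y. Proof. by []. Qed.
Lemma val1 : val (1%g : gT HG) = 1%:M. Proof. by []. Qed.
Lemma valX (x : gT HG) n : val (x ^+ n)%g = val x ^+ n.
Proof.
elim: n => [|n IH]; first by rewrite expg0 expr0.
by rewrite expgS exprS valM IH.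
Qed.
Lemma card_gT : #|gT HG| = #|` G|.
Proof. by rewrite -cardfE. Qed.
End Props.

Definition C3T (r : nat) : predArgType := {ffun 'I_r -> 'Z_3}.
HB.instance Definition _ r := Finite.copy (C3T r) {ffun 'I_r -> 'Z_3}.
HB.instance Definition _ r := GRing.Zmodule.copy (C3T r) {ffun 'I_r -> 'Z_3}.
Definition C3G r : finGroupType :=
  FinRing.Zmodule_to_finGroup (FinRing.Zmodule.clone (C3T r) _).

Theorem lemma6p2 (K : closedFieldType) (r : nat)
  (G : {fset 'M[K]_3}) :
  3%N \in [pchar K] ->
  is_finite_subgroup_SL3 G ->
  small G ->
  #|` G| = (3 ^ r)%N ->
  iso_C3pow G r.
Proof.
move=> ch3 HG sm cG.
have cardT : #|gT HG| = (3 ^ r)%N by rewrite card_gT.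
have ord (x : gT HG) : (x ^+ (3 ^ r))%g = 1%g.
  by rewrite -cardT -cardsT expg_cardG // inE.
have N3 (x : gT HG) : (val x - 1) ^+ 3 = 0.
  by apply: (@unip3 _ _ r ch3); rewrite -valX ord.
have x3 (x : gT HG) : (x ^+ 3)%g = 1%g.
  by apply: val_inj; rewrite valX val1; apply: frob3.
have rk (x : gT HG) : x != 1%g -> \rank (val x - 1) = 2%N.
  move=> xn1; apply: rank2; [exact: N3 | | exact: sm (fsvalP x)].
  apply/negP => /eqP e; case/negP: xn1; apply/eqP/val_inj; exact: e.
have pG : pgroup 3 [set: gT HG].
  by rewrite /pgroup cardsT cardT pnatX pnat_id.
have abT : abelian [set: gT HG].
  have [Z1|Zn] := eqVneq ('Z([set: gT HG]))%g 1%g.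
    by rewrite (trivg_center_pgroup pG Z1) abelian1.
  have [z Zz z1] := trivgPn _ Zn.
  move/centerP: Zz => [_ cz].
  set N := val z - 1.
  have cN (x : gT HG) : val x * N = N * val x.
    have e : val (x * z)%g = val (z * x)%g by rewrite (cz x) ?inE.
    move: e; rewrite !valM => e.
    by rewrite /N mulrBr mulrBl mulr1 mul1r; congr (_ - _).
  have N2 : N ^+ 2 != 0 by apply: sq_neq0; apply: rk.
  apply/centsP => x _ y _; apply: val_inj; rewrite !valM.
  have [p ->] := comm_poly (N3 z) N2 (cN x).
  have [q ->] := comm_poly (N3 z) N2 (cN y).
  exact: comm_horner_mx2.
have abE : abelem 3 [set: gT HG].
  by apply/abelemP => //; split => // x _; apply: x3.
have abC : abelem 3 [set: C3G r].
  apply/abelemP => //; split; first exact: FinRing.zmod_abelian.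
  move=> x _; rewrite FinRing.zmodXgE FinRing.zmod1gE; apply/ffunP => i.
  rewrite ffunMnE ffunE.
  by case: (x i) => -[|[|[|//]]] Hj; apply: val_inj.
have iso : [set: C3G r] \isog [set: gT HG].
  rewrite isog_sym (isog_abelem_card _ abE) abC /= !cardsT cardT card_ffun card_ord.
  by rewrite card_ord.
case/isogP: iso => f injf imf.
exists (fun a : C3pow r => val (f (a : C3G r))); split.
- move=> a b /val_inj e; exact: (injmP injf) e => //; rewrite inE.
- by move=> a; apply: fsvalP.
- move=> g Hg; have : (FSetSub Hg : gT HG) \in (f @* [set: C3G r])%g.
    by rewrite imf inE.
  rewrite morphimEdom => /imsetP [a _ e]; exists a; by rewrite -e.
- move=> a b; rewrite -valM -morphM ?inE //.
Qed.
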